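(* There is an absolute constant $C_0>0$ such that for every nonconstant harmonic function $u:\mathbb{C}\to\mathbb{R}$ there exists a sequence of discs $D(z_n,r_n)$ ($z_n\in\mathbb{C}$, $r_n>0$) with $u(z_n)=0$ and $M(|u|,z_n,r_n)\le C_0\,M(u,z_n,\tfrac34 r_n)$ for all $n$, and $\lim_{n\to\infty}M(u,z_n,r_n)=+\infty$.
   Context: For a real function $h$, $M(h,z,r)=\sup_{D(z,r)}h$ denotes the supremum of $h$ over the disc $D(z,r)$ of center $z$ and radius $r$. *)

(* Defs.v *)
From Stdlib Require Import Reals.
From Coquelicot Require Import Coquelicot.
Open Scope R_scope.

(* The complex plane C is identified with R*R (z = x + i y  <->  (x,y)). *)

Definition dx (u : R * R -> R) : R * R -> R :=
  fun p => Derive (fun t => u (t, snd p)) (fst p).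
Definition dy (u : R * R -> R) : R * R -> R :=
  fun p => Derive (fun t => u (fst p, t)) (snd p).

Definition has_partials (u : R * R -> R) : Prop :=
  forall p : R * R,
    ex_derive (fun t => u (t, snd p)) (fst p) /\
    ex_derive (fun t => u (fst p, t)) (snd p).

Definition C2 (u : R * R -> R) : Prop :=
  has_partials u /\ has_partials (dx u) /\ has_partials (dy u) /\
  forall p : R * R,
    continuous u p /\ continuous (dx u) p /\ continuous (dy u) p /\
    continuous (dx (dx u)) p /\ continuous (dy (dx u)) p /\
    continuous (dx (dy u)) p /\ continuous (dy (dy u)) p.

Definition harmonic (u : R * R -> R) : Prop :=
  C2 u /\ forall p : R * R, dx (dx u) p + dy (dy u) p = 0.

Definition in_disc (z : R * R) (r : R) (w : R * R) : Prop :=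
  sqrt ((fst w - fst z) ^ 2 + (snd w - snd z) ^ 2) < r.

Definition M (h : R * R -> R) (z : R * R) (r : R) : Rbar :=
  Lub_Rbar (fun y => exists w, in_disc z r w /\ y = h w).

(* Main.v *)
Require Import Defs.
From Stdlib Require Import Reals Lra Psatz FunctionalExtensionality Classical ClassicalEpsilon ZArith Rgeom.
From Coquelicot Require Import Coquelicot.
Open Scope R_scope.


Section Cont.
Context {U : UniformSpace}.
Lemma c_mult (f g : U -> R) x : continuous f x -> continuous g x -> continuous (fun t => f t * g t) x.
Proof. intros; apply (continuous_mult f g); auto. Qed.
Lemma c_plus (f g : U -> R) x : continuous f x -> continuous g x -> continuous (fun t => f t + g t) x.
Proof. intros; apply (continuous_plus f g); auto. Qed.
Lemma c_opp (f : U -> R) x : continuous f x -> continuous (fun t => - f t) x.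
Proof. intros; apply (continuous_opp f); auto. Qed.
Lemma c_pair (f g : U -> R) (h : R*R -> R) x : continuous f x -> continuous g x -> continuous h (f x, g x) -> continuous (fun t => h (f t, g t)) x.
Proof.
  intros Hf Hg Hh. apply (continuous_comp_2 f g (fun a b => h (a,b))); auto.
  eapply continuous_ext; [| exact Hh]. intros [a b]; reflexivity.
Qed.
Lemma c_cos (f : U -> R) x : continuous f x -> continuous (fun t => cos (f t)) x.
Proof. intros; apply (continuous_comp f cos); auto; apply continuous_cos. Qed.
Lemma c_sin (f : U -> R) x : continuous f x -> continuous (fun t => sin (f t)) x.
Proof. intros; apply (continuous_comp f sin); auto; apply continuous_sin. Qed.
End Cont.

Lemma cont_eps (g : R*R -> R) x y : continuous g (x,y) -> forall eps:posreal, exists δ:posreal, forall a b, Rabs (a - x) < δ -> Rabs (b - y) < δ -> Rabs (g (a,b) - g (x,y)) < eps.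
Proof.
  intros H eps. destruct (proj1 (filterlim_locally _ _) H eps) as [δ Hd]. exists δ.
  intros a b Ha Hb. specialize (Hd (a,b)). apply Hd. split; assumption.
Qed.

Lemma partial_x (f : R*R -> R) t v : has_partials f -> is_derive (fun s => f (s, v)) t (dx f (t, v)).
Proof. intros Hp. destruct (Hp (t,v)) as [H _]. apply Derive_correct in H. exact H. Qed.
Lemma partial_y (f : R*R -> R) x t : has_partials f -> is_derive (fun s => f (x, s)) t (dy f (x, t)).
Proof. intros Hp. destruct (Hp (x,t)) as [_ H]. apply Derive_correct in H. exact H. Qed.

Lemma mvt_aux (F dF : R -> R) a b : (forall t, is_derive F t (dF t)) -> exists c, Rabs (c - a) <= Rabs (b - a) /\ F b - F a = dF c * (b - a).
Proof.
  intros H. destruct (MVT_gen F a b dF) as [c [Hc Heq]].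
  - intros; apply H.
  - intros t _. apply continuity_pt_filterlim. apply (ex_derive_continuous (V:=R_NormedModule) F). eexists; apply H.
  - exists c; split; auto.
    unfold Rmin, Rmax in Hc; destruct (Rle_dec a b); unfold Rabs; repeat destruct Rcase_abs; lra.
Qed.

Lemma diff_C1 (f : R*R -> R) x y :
  has_partials f -> continuous (dx f) (@pair R R x y) -> continuous (dy f) (@pair R R x y) ->
  differentiable_pt_lim (fun a b => f (a,b)) x y (dx f (x,y)) (dy f (x,y)).
Proof.
  intros Hp Hcx Hcy eps.
  assert (He2 : 0 < eps/2) by (destruct eps; simpl; lra).
  destruct (cont_eps _ _ _ Hcx (mkposreal _ He2)) as [d1 H1].
  destruct (cont_eps _ _ _ Hcy (mkposreal _ He2)) as [d2 H2].
  assert (Hd : 0 < Rmin d1 d2) by (apply Rmin_pos; [destruct d1|destruct d2]; simpl; auto).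
  exists (mkposreal _ Hd). simpl. intros a b Ha Hb.
  destruct (mvt_aux (fun s => f (s, b)) (fun s => dx f (s, b)) x a) as [c [Hc Ec]].
  { intros; apply partial_x; auto. }
  destruct (mvt_aux (fun s => f (x, s)) (fun s => dy f (x, s)) y b) as [e [He Ee]].
  { intros; apply partial_y; auto. }
  cbv beta in Ec, Ee.
  assert (Hmin1 := Rmin_l d1 d2). assert (Hmin2 := Rmin_r d1 d2).
  assert (K1 : Rabs (dx f (c,b) - dx f (x,y)) < eps/2) by (apply H1; lra).
  assert (K2 : Rabs (dy f (x,e) - dy f (x,y)) < eps/2).
  { apply H2; [rewrite Rminus_diag, Rabs_R0; destruct d2; simpl; lra | lra]. }
  assert (Eq : f (a, b) - f (x, y) - (dx f (x, y) * (a - x) + dy f (x, y) * (b - y)) =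
    (dx f (c,b) - dx f (x,y)) * (a - x) + (dy f (x,e) - dy f (x,y)) * (b - y)).
  { assert (f (a,b) - f (x,y) = (f (a,b) - f (x,b)) + (f (x,b) - f(x,y))) as -> by ring.
    rewrite Ec, Ee. ring. }
  rewrite Eq.
  eapply Rle_trans; [apply Rabs_triang|]. rewrite !Rabs_mult.
  assert (M1 := Rmax_l (Rabs (a - x)) (Rabs (b - y))).
  assert (M2 := Rmax_r (Rabs (a - x)) (Rabs (b - y))).
  assert (P1 := Rabs_pos (a - x)). assert (P2 := Rabs_pos (b - y)).
  assert (Q1 := Rabs_pos (dx f (c,b) - dx f (x,y))). assert (Q2 := Rabs_pos (dy f (x,e) - dy f (x,y))).
  nra.
Qed.

Lemma chain (f : R*R -> R) (A B : R -> R) t dA dB : has_partials f ->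
  continuous (dx f) (A t, B t) -> continuous (dy f) (A t, B t) ->
  is_derive A t dA -> is_derive B t dB ->
  is_derive (fun s => f (A s, B s)) t (dx f (A t, B t) * dA + dy f (A t, B t) * dB).
Proof.
  intros Hp Hx Hy HA HB. apply is_derive_Reals.
  apply (derivable_pt_lim_comp_2d (fun a b => f (a,b)) A B); [apply diff_C1; auto | apply is_derive_Reals; auto ..].
Qed.

Lemma d_plus (f g : R -> R) x a b : is_derive f x a -> is_derive g x b -> is_derive (fun t => f t + g t) x (a + b).
Proof. intros; apply (is_derive_plus f g); auto. Qed.
Lemma d_mult (f g : R -> R) x a b : is_derive f x a -> is_derive g x b -> is_derive (fun t => f t * g t) x (a * g x + f x * b).
Proof. intros; apply (is_derive_mult f g); auto. intros; apply Rmult_comm. Qed.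
Lemma d_eq (f : R -> R) x a b : is_derive f x a -> a = b -> is_derive f x b.
Proof. intros H ->; auto. Qed.
Lemma I_plus (f g : R -> R) a b : ex_RInt f a b -> ex_RInt g a b -> RInt (fun t => f t + g t) a b = RInt f a b + RInt g a b.
Proof. intros; apply (RInt_plus f g); auto. Qed.
Lemma I_scal (f : R -> R) a b k : ex_RInt f a b -> RInt (fun t => k * f t) a b = k * RInt f a b.
Proof. intros; apply (RInt_scal f); auto. Qed.
Lemma I_const a b c : RInt (fun _ => c) a b = (b - a) * c.
Proof. apply (RInt_const (V:=R_CompleteNormedModule)). Qed.
Lemma I_derive (F f : R -> R) a b : (forall x, is_derive F x (f x)) -> (forall x, continuous f x) -> RInt f a b = F b - F a.
Proof. intros H1 H2. apply is_RInt_unique. apply (is_RInt_derive F f); auto. Qed.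
Lemma ex_I (f : R -> R) a b : (forall x, continuous f x) -> ex_RInt f a b.
Proof. intros H; apply (ex_RInt_continuous (V:=R_CompleteNormedModule)); auto. Qed.

Lemma deriv_under (F dF : R -> R -> R) a b x :
 (forall s t, is_derive (fun s => F s t) s (dF s t)) ->
 (forall s t, continuous (fun z : R*R => dF (fst z) (snd z)) (s,t)) ->
 (forall s t, continuous (fun z : R*R => F (fst z) (snd z)) (s,t)) ->
 is_derive (fun s => RInt (fun t => F s t) a b) x (RInt (fun t => dF x t) a b).
Proof.
  intros HD HdC HC.
  assert (E : (fun u v => Derive (fun z => F z v) u) = dF).
  { apply functional_extensionality; intro u; apply functional_extensionality; intro v.
    apply is_derive_unique; apply HD. }
  assert (E2 : RInt (fun t => dF x t) a b = RInt (fun t => Derive (fun u => F u t) x) a b).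
  { apply RInt_ext. intros t _. symmetry. apply is_derive_unique; apply HD. }
  rewrite E2. apply (is_derive_RInt_param F).
  - exists (mkposreal 1 Rlt_0_1). intros y _ t _. eexists; apply HD.
  - intros t _. rewrite E. apply continuity_2d_pt_filterlim. apply HdC.
  - exists (mkposreal 1 Rlt_0_1). intros y _. apply ex_I. intros t.
    apply (continuous_comp_2 (fun _ => y) (fun t => t) (fun a b => F a b)).
    apply continuous_const. apply continuous_id. apply HC.
Qed.

Lemma c_minus {U : UniformSpace} (f g : U -> R) x : continuous f x -> continuous g x -> continuous (fun t => f t - g t) x.
Proof. intros; apply (continuous_minus f g); auto. Qed.

Ltac cont1 := match goal with
 | |- continuous (fun _ => ?c) _ => apply continuous_const
 | |- continuous (fun x => x) _ => apply continuous_id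
 | |- continuous (fun x => @?a x + @?b x) _ => apply (c_plus a b)
 | |- continuous (fun x => @?a x - @?b x) _ => apply (c_minus a b)
 | |- continuous (fun x => @?a x * @?b x) _ => apply (c_mult a b)
 | |- continuous (fun x => - @?a x) _ => apply (c_opp a)
 | |- continuous (fun x => cos (@?a x)) _ => apply (c_cos a)
 | |- continuous (fun x => sin (@?a x)) _ => apply (c_sin a)
 | |- continuous (fun x => fst x) (_,_) => apply continuous_fst
 | |- continuous (fun x => snd x) (_,_) => apply continuous_snd
 | |- continuous (fun x => ?h (@?a x, @?b x)) _ => apply (c_pair a b h)
 end.
Ltac cont := repeat cont1.

Lemma d_sin t : is_derive sin t (cos t). Proof. auto_derive; auto; ring. Qed.
Lemma d_cos t : is_derive cos t (- sin t). Proof. auto_derive; auto; ring. Qed.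
Lemma d_minus (f g : R -> R) x a b : is_derive f x a -> is_derive g x b -> is_derive (fun t => f t - g t) x (a - b).
Proof. intros; apply (is_derive_minus f g); auto. Qed.
Lemma d_id x : is_derive (fun t : R => t) x 1.
Proof. apply (is_derive_id (K:=R_AbsRing)). Qed.
Lemma d_const (c : R) x : is_derive (fun _ : R => c) x 0.
Proof. apply (is_derive_const (K:=R_AbsRing) (V:=R_NormedModule)). Qed.
Lemma const_of_deriv0 (F : R -> R) : (forall x, is_derive F x 0) -> forall x y, F x = F y.
Proof. intros H x y. destruct (mvt_aux F (fun _ => 0) y x H) as [c [_ E]]. lra. Qed.
Lemma P0_aux (p : R*R) t : @pair R R (fst p + 0 * cos t) (snd p + 0 * sin t) = p.
Proof. rewrite !Rmult_0_l, !Rplus_0_r. destruct p; reflexivity. Qed.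
Lemma d_mulc (f : R -> R) c x a : is_derive f x a -> is_derive (fun t => f t * c) x (a * c).
Proof. intros H. replace (a*c) with (a * c + f x * 0) by ring. apply (d_mult f (fun _ => c)); [exact H | apply d_const]. Qed.
Ltac rring := match goal with |- ?a = ?b => change (@eq R a b); ring end.
Ltac rlra := match goal with |- ?a = ?b => change (@eq R a b); lra end.
Lemma I_minus (f g : R -> R) a b : ex_RInt f a b -> ex_RInt g a b -> RInt (fun t => f t - g t) a b = RInt f a b - RInt g a b.
Proof. intros; apply (RInt_minus f g); auto. Qed.
Lemma d_cmul (f : R -> R) c x a : is_derive f x a -> is_derive (fun t => c * f t) x (c * a).
Proof. intros; apply is_derive_scal; auto. Qed.
Lemma d_ncos t : is_derive (fun t => - cos t) t (sin t). Proof. auto_derive; auto; ring. Qed.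
Lemma deriv_cont_pt (F : R -> R) t l : is_derive F t l -> continuity_pt F t.
Proof. intros H. apply continuity_pt_filterlim. apply (ex_derive_continuous (V:=R_NormedModule)). exists l; exact H. Qed.


Definition P (p : R*R) (s t : R) : R*R := @pair R R (fst p + s * cos t) (snd p + s * sin t).

Section Harm.
Variable u : R*R -> R.
Hypothesis Hu : harmonic u.

Let Hp : has_partials u. Proof. destruct Hu as [[H _] _]; exact H. Qed.
Let Hpx : has_partials (dx u). Proof. destruct Hu as [[_ [H _]] _]; exact H. Qed.
Let Hpy : has_partials (dy u). Proof. destruct Hu as [[_ [_ [H _]]] _]; exact H. Qed.
Let Cu : forall q, continuous u q. Proof. intro q; destruct Hu as [[_ [_ [_ Hc]]] _]; destruct (Hc q) as [H [_ [_ [_ [_ [_ _]]]]]]; exact H. Qed.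
Let Cx : forall q, continuous (dx u) q. Proof. intro q; destruct Hu as [[_ [_ [_ Hc]]] _]; destruct (Hc q) as [_ [H [_ [_ [_ [_ _]]]]]]; exact H. Qed.
Let Cy : forall q, continuous (dy u) q. Proof. intro q; destruct Hu as [[_ [_ [_ Hc]]] _]; destruct (Hc q) as [_ [_ [H [_ [_ [_ _]]]]]]; exact H. Qed.
Let Cxx : forall q, continuous (dx (dx u)) q. Proof. intro q; destruct Hu as [[_ [_ [_ Hc]]] _]; destruct (Hc q) as [_ [_ [_ [H [_ [_ _]]]]]]; exact H. Qed.
Let Cxy : forall q, continuous (dy (dx u)) q. Proof. intro q; destruct Hu as [[_ [_ [_ Hc]]] _]; destruct (Hc q) as [_ [_ [_ [_ [H [_ _]]]]]]; exact H. Qed.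
Let Cyx : forall q, continuous (dx (dy u)) q. Proof. intro q; destruct Hu as [[_ [_ [_ Hc]]] _]; destruct (Hc q) as [_ [_ [_ [_ [_ [H _]]]]]]; exact H. Qed.
Let Cyy : forall q, continuous (dy (dy u)) q. Proof. intro q; destruct Hu as [[_ [_ [_ Hc]]] _]; destruct (Hc q) as [_ [_ [_ [_ [_ [_ H]]]]]]; exact H. Qed.
Let Lap : forall q, dx (dx u) q + dy (dy u) q = 0. Proof. destruct Hu as [_ H]; exact H. Qed.

Ltac cnt := cont; try match goal with
  | |- continuous u _ => apply Cu
  | |- continuous (dx u) _ => apply Cx
  | |- continuous (dy u) _ => apply Cy
  | |- continuous (dx (dx u)) _ => apply Cxx
  | |- continuous (dy (dx u)) _ => apply Cxy
  | |- continuous (dx (dy u)) _ => apply Cyx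
  | |- continuous (dy (dy u)) _ => apply Cyy end.

Lemma ds_gen (g : R*R -> R) p s t : has_partials g -> (forall q, continuous (dx g) q) -> (forall q, continuous (dy g) q) ->
  is_derive (fun s => g (P p s t)) s (dx g (P p s t) * cos t + dy g (P p s t) * sin t).
Proof.
  intros H1 H2 H3. unfold P.
  eapply d_eq. apply (chain g (fun s => fst p + s * cos t) (fun s => snd p + s * sin t)); [exact H1|apply H2|apply H3| |].
  all: try (auto_derive; [exact I|reflexivity]).
  simpl. rring.
Qed.
Lemma dt_gen (g : R*R -> R) p s t : has_partials g -> (forall q, continuous (dx g) q) -> (forall q, continuous (dy g) q) ->
  is_derive (fun t => g (P p s t)) t (dx g (P p s t) * (- (s * sin t)) + dy g (P p s t) * (s * cos t)).
Proof.
  intros H1 H2 H3. unfold P.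
  eapply d_eq. apply (chain g (fun t => fst p + s * cos t) (fun t => snd p + s * sin t)); [exact H1|apply H2|apply H3| |].
  all: try (auto_derive; [exact I|reflexivity]).
  simpl. rring.
Qed.



Lemma Psi_zero p s : RInt (fun t => dx u (P p s t) * cos t + dy u (P p s t) * sin t) 0 (2*PI) = 0.
Proof.
  set (Fp := fun s t => dx u (P p s t) * cos t + dy u (P p s t) * sin t).
  set (dFp := fun s t => (dx (dx u) (P p s t) * cos t + dy (dx u) (P p s t) * sin t) * cos t
                     + (dx (dy u) (P p s t) * cos t + dy (dy u) (P p s t) * sin t) * sin t).
  assert (DQ : forall s, is_derive (fun s => s * RInt (fun t => Fp s t) 0 (2*PI)) s 0).
  { intro s0. eapply d_eq. apply d_mult. apply d_id.
    apply (deriv_under Fp dFp).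
    - intros s1 t. unfold Fp, dFp. apply d_plus; apply d_mulc; apply ds_gen; auto.
    - intros s1 t. unfold dFp, P; cnt.
    - intros s1 t. unfold Fp, P; cnt.
    - set (G := fun t => dx u (P p s0 t) * sin t - dy u (P p s0 t) * cos t).
      set (dG := fun t => ((dx (dx u) (P p s0 t) * (- (s0 * sin t)) + dy (dx u) (P p s0 t) * (s0 * cos t)) * sin t
                       + dx u (P p s0 t) * cos t)
                       - ((dx (dy u) (P p s0 t) * (- (s0 * sin t)) + dy (dy u) (P p s0 t) * (s0 * cos t)) * cos t
                          + dy u (P p s0 t) * (- sin t))).
      assert (EI : RInt (fun t => dG t) 0 (2*PI) = 0).
      { assert (HD1 : forall t, is_derive G t (dG t)).
        { intro t. unfold G, dG. apply d_minus; apply d_mult; try apply dt_gen; auto; [apply d_sin | apply d_cos]. }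
        assert (HC1 : forall t, continuous dG t).
        { intro t. unfold dG, P. cnt. }
        rewrite (I_derive G dG _ _ HD1 HC1).
        unfold G, P. rewrite sin_2PI, cos_2PI, sin_0, cos_0. rring. }
      assert (EF : ex_RInt (fun t => Fp s0 t) 0 (2*PI)) by (apply ex_I; intro t; unfold Fp, P; cnt).
      assert (EdF : ex_RInt (fun t => dFp s0 t) 0 (2*PI)) by (apply ex_I; intro t; unfold dFp, P; cnt).
      assert (EsdF : ex_RInt (fun t => s0 * dFp s0 t) 0 (2*PI)) by (apply ex_I; intro t; apply c_mult; [apply continuous_const|]; unfold dFp, P; cnt).
      transitivity (RInt (fun t => Fp s0 t + s0 * dFp s0 t) 0 (2*PI)).
      { rewrite (I_plus _ _ _ _ EF EsdF). rewrite (I_scal _ _ _ _ EdF). rring. }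
      transitivity (RInt (fun t => dG t) 0 (2*PI)); [|exact EI]. apply RInt_ext. intros t _. unfold Fp, dFp, dG.
      match goal with |- ?L = ?R => assert (L - R = s0 * (dx (dx u) (P p s0 t) + dy (dy u) (P p s0 t)) * (sin t ^ 2 + cos t ^ 2)) by ring end.
      rewrite Lap in H. rlra. }
  destruct (Req_dec s 0) as [->|Hs].
  - rewrite (RInt_ext _ (fun t => dx u p * cos t + dy u p * sin t)).
    + assert (HD1 : forall t, is_derive (fun t => dx u p * sin t - dy u p * cos t) t (dx u p * cos t + dy u p * sin t)).
      { intro t. eapply d_eq. apply d_minus; apply d_cmul; [apply d_sin|apply d_cos]. rring. }
      assert (HC1 : forall t, continuous (fun t => dx u p * cos t + dy u p * sin t) t).
      { intro t. cnt. }
      rewrite (I_derive _ _ _ _ HD1 HC1).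
      rewrite sin_2PI, cos_2PI, sin_0, cos_0. rring.
    + intros t _. unfold P. rewrite P0_aux. reflexivity.
  - assert (E := const_of_deriv0 _ DQ s 0). cbv beta in E. rewrite Rmult_0_l in E.
    apply Rmult_integral in E. destruct E as [E|E]; [contradiction|exact E].
Qed.

Lemma MVP p s : RInt (fun t => u (P p s t)) 0 (2*PI) = 2 * PI * u p.
Proof.
  assert (D : forall s, is_derive (fun s => RInt (fun t => u (P p s t)) 0 (2*PI)) s 0).
  { intro s0. eapply d_eq; [|apply (Psi_zero p s0)].
    apply (deriv_under (fun s t => u (P p s t)) (fun s t => dx u (P p s t) * cos t + dy u (P p s t) * sin t)).
    - intros; apply ds_gen; auto.
    - intros s1 t. unfold P; cnt.
    - intros s1 t. unfold P; cnt. }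
  rewrite (const_of_deriv0 _ D s 0).
  rewrite (RInt_ext _ (fun _ => u p)). rewrite I_const. rring.
  intros t _. unfold P. rewrite P0_aux. reflexivity.
Qed.


Lemma MVP_x p s : RInt (fun t => dx u (P p s t)) 0 (2*PI) = 2 * PI * dx u p.
Proof.
  destruct p as [p1 p2].
  assert (H1 : is_derive (fun a => RInt (fun t => u (P (a, p2) s t)) 0 (2*PI)) p1 (RInt (fun t => dx u (P (p1,p2) s t)) 0 (2*PI))).
  { apply (deriv_under (fun a t => u (P (a, p2) s t)) (fun a t => dx u (P (a,p2) s t))).
    - intros a t. unfold P; simpl. eapply d_eq.
      apply (chain u (fun a => a + s * cos t) (fun _ => p2 + s * sin t)); [exact Hp|apply Cx|apply Cy| |].
      + eapply d_eq. apply d_plus. apply d_id. apply d_const. reflexivity.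
      + apply d_const.
      + rring.
    - intros a t. unfold P; simpl; cnt.
    - intros a t. unfold P; simpl; cnt. }
  assert (H2 : is_derive (fun a => 2 * PI * u (a, p2)) p1 (2 * PI * dx u (p1, p2))).
  { apply d_cmul. apply partial_x. exact Hp. }
  assert (H3 := is_derive_ext _ _ _ _ (fun a => MVP (a, p2) s) H1). cbv beta in H3.
  apply is_derive_unique in H3. apply is_derive_unique in H2. rewrite H3 in H2. exact H2.
Qed.

Lemma MVP_y p s : RInt (fun t => dy u (P p s t)) 0 (2*PI) = 2 * PI * dy u p.
Proof.
  destruct p as [p1 p2].
  assert (H1 : is_derive (fun a => RInt (fun t => u (P (p1, a) s t)) 0 (2*PI)) p2 (RInt (fun t => dy u (P (p1,p2) s t)) 0 (2*PI))).
  { apply (deriv_under (fun a t => u (P (p1, a) s t)) (fun a t => dy u (P (p1,a) s t))).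
    - intros a t. unfold P; simpl. eapply d_eq.
      apply (chain u (fun _ => p1 + s * cos t) (fun a => a + s * sin t)); [exact Hp|apply Cx|apply Cy| |].
      + apply d_const.
      + eapply d_eq. apply d_plus. apply d_id. apply d_const. reflexivity.
      + rring.
    - intros a t. unfold P; simpl; cnt.
    - intros a t. unfold P; simpl; cnt. }
  assert (H2 : is_derive (fun a => 2 * PI * u (p1, a)) p2 (2 * PI * dy u (p1, p2))).
  { apply d_cmul. apply partial_y. exact Hp. }
  assert (H3 := is_derive_ext _ _ _ _ (fun a => MVP (p1, a) s) H1). cbv beta in H3.
  apply is_derive_unique in H3. apply is_derive_unique in H2. rewrite H3 in H2. exact H2.
Qed.

End Harm.


Section Harm2.
Variable u : R*R -> R.
Hypothesis Hu : harmonic u.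

Let Hp : has_partials u. Proof. destruct Hu as [[H _] _]; exact H. Qed.
Let Hpx : has_partials (dx u). Proof. destruct Hu as [[_ [H _]] _]; exact H. Qed.
Let Hpy : has_partials (dy u). Proof. destruct Hu as [[_ [_ [H _]]] _]; exact H. Qed.
Let Cu : forall q, continuous u q. Proof. intro q; destruct Hu as [[_ [_ [_ Hc]]] _]; destruct (Hc q) as [H [_ [_ [_ [_ [_ _]]]]]]; exact H. Qed.
Let Cx : forall q, continuous (dx u) q. Proof. intro q; destruct Hu as [[_ [_ [_ Hc]]] _]; destruct (Hc q) as [_ [H [_ [_ [_ [_ _]]]]]]; exact H. Qed.
Let Cy : forall q, continuous (dy u) q. Proof. intro q; destruct Hu as [[_ [_ [_ Hc]]] _]; destruct (Hc q) as [_ [_ [H [_ [_ [_ _]]]]]]; exact H. Qed.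
Let Cxx : forall q, continuous (dx (dx u)) q. Proof. intro q; destruct Hu as [[_ [_ [_ Hc]]] _]; destruct (Hc q) as [_ [_ [_ [H [_ [_ _]]]]]]; exact H. Qed.
Let Cxy : forall q, continuous (dy (dx u)) q. Proof. intro q; destruct Hu as [[_ [_ [_ Hc]]] _]; destruct (Hc q) as [_ [_ [_ [_ [H [_ _]]]]]]; exact H. Qed.
Let Cyx : forall q, continuous (dx (dy u)) q. Proof. intro q; destruct Hu as [[_ [_ [_ Hc]]] _]; destruct (Hc q) as [_ [_ [_ [_ [_ [H _]]]]]]; exact H. Qed.
Let Cyy : forall q, continuous (dy (dy u)) q. Proof. intro q; destruct Hu as [[_ [_ [_ Hc]]] _]; destruct (Hc q) as [_ [_ [_ [_ [_ [_ H]]]]]]; exact H. Qed.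
Let Lap : forall q, dx (dx u) q + dy (dy u) q = 0. Proof. destruct Hu as [_ H]; exact H. Qed.

Ltac cnt := cont; try match goal with
  | |- continuous u _ => apply Cu
  | |- continuous (dx u) _ => apply Cx
  | |- continuous (dy u) _ => apply Cy
  | |- continuous (dx (dx u)) _ => apply Cxx
  | |- continuous (dy (dx u)) _ => apply Cxy
  | |- continuous (dx (dy u)) _ => apply Cyx
  | |- continuous (dy (dy u)) _ => apply Cyy end.


Lemma CM_x p s : s <> 0 -> RInt (fun t => cos t * u (P p s t)) 0 (2*PI) = PI * s * dx u p.
Proof.
  intros Hs.
  set (J := fun s => RInt (fun t => cos t * u (P p s t)) 0 (2*PI)).
  set (dJi := fun s t => cos t * (dx u (P p s t) * cos t + dy u (P p s t) * sin t)).
  set (dTU := fun s t => dx u (P p s t) * (- (s * sin t)) + dy u (P p s t) * (s * cos t)).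
  assert (DJ : forall s, is_derive J s (RInt (fun t => dJi s t) 0 (2*PI))).
  { intro s0. apply (deriv_under (fun s t => cos t * u (P p s t)) dJi).
    - intros s1 t. apply d_cmul. apply ds_gen; auto.
    - intros s1 t. unfold dJi, P; cnt.
    - intros s1 t. unfold P; cnt. }
  assert (E1 : forall s, J s + RInt (fun t => sin t * dTU s t) 0 (2*PI) = 0).
  { intro s0.
    assert (HD1 : forall t, is_derive (fun t => sin t * u (P p s0 t)) t (cos t * u (P p s0 t) + sin t * dTU s0 t)).
    { intro t. apply d_mult. apply d_sin. apply dt_gen; auto. }
    assert (HC1 : forall t, continuous (fun t => cos t * u (P p s0 t) + sin t * dTU s0 t) t).
    { intro t. unfold dTU, P; cnt. }
    assert (X := I_derive _ _ 0 (2*PI) HD1 HC1). cbv beta in X. rewrite sin_2PI, sin_0 in X.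
    unfold J. rewrite <- I_plus. etransitivity. exact X. rring.
    apply ex_I; intro t; unfold P; cnt.
    apply ex_I; intro t; unfold dTU, P; cnt. }
  assert (E3 : forall s, s * RInt (fun t => dx u (P p s t)) 0 (2*PI) = s * RInt (fun t => dJi s t) 0 (2*PI) - RInt (fun t => sin t * dTU s t) 0 (2*PI)).
  { intro s0. rewrite <- I_scal. rewrite <- I_scal. rewrite <- I_minus.
    - apply RInt_ext. intros t _. unfold dJi, dTU.
      match goal with |- ?L = ?R => assert (L - R = s0 * dx u (P p s0 t) * (1 - (sin t ^ 2 + cos t ^ 2))) by ring end.
      rewrite <- (sin2_cos2 t) in H. unfold Rsqr in H. rlra.
    - apply ex_I; intro t; apply c_mult; [apply continuous_const|]; unfold dJi, P; cnt.
    - apply ex_I; intro t; unfold dTU, P; cnt.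
    - apply ex_I; intro t; unfold dJi, P; cnt.
    - apply ex_I; intro t; unfold P; cnt. }
  assert (DK : forall s, is_derive (fun s => s * J s - PI * s^2 * dx u p) s 0).
  { intro s0. eapply d_eq. apply d_minus. apply d_mult. apply d_id. apply DJ.
    apply (d_mulc (fun s => PI * s^2) (dx u p) s0 (2 * PI * s0)). auto_derive; auto; rring.
    specialize (E3 s0). rewrite (MVP_x u Hu) in E3. specialize (E1 s0). cbv beta. rlra. }
  assert (K := const_of_deriv0 _ DK s 0). cbv beta in K.
  rewrite Rmult_0_l, pow_i, Rmult_0_r, Rmult_0_l, Rminus_0_r in K by lia.
  apply (Rmult_eq_reg_l s); auto. unfold J in K. lra.
Qed.

Lemma CM_y p s : s <> 0 -> RInt (fun t => sin t * u (P p s t)) 0 (2*PI) = PI * s * dy u p.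
Proof.
  intros Hs.
  set (J := fun s => RInt (fun t => sin t * u (P p s t)) 0 (2*PI)).
  set (dJi := fun s t => sin t * (dx u (P p s t) * cos t + dy u (P p s t) * sin t)).
  set (dTU := fun s t => dx u (P p s t) * (- (s * sin t)) + dy u (P p s t) * (s * cos t)).
  assert (DJ : forall s, is_derive J s (RInt (fun t => dJi s t) 0 (2*PI))).
  { intro s0. apply (deriv_under (fun s t => sin t * u (P p s t)) dJi).
    - intros s1 t. apply d_cmul. apply ds_gen; auto.
    - intros s1 t. unfold dJi, P; cnt.
    - intros s1 t. unfold P; cnt. }
  assert (E1 : forall s, J s + RInt (fun t => - cos t * dTU s t) 0 (2*PI) = 0).
  { intro s0.
    assert (HD1 : forall t, is_derive (fun t => - cos t * u (P p s0 t)) t (sin t * u (P p s0 t) + - cos t * dTU s0 t)).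
    { intro t. eapply d_eq. apply d_mult. apply d_ncos. apply dt_gen; auto. reflexivity. }
    assert (HC1 : forall t, continuous (fun t => sin t * u (P p s0 t) + - cos t * dTU s0 t) t).
    { intro t. unfold dTU, P; cnt. }
    assert (X := I_derive _ _ 0 (2*PI) HD1 HC1). cbv beta in X. unfold P in X. rewrite cos_2PI, sin_2PI, cos_0, sin_0 in X.
    unfold J. rewrite <- I_plus. etransitivity. exact X. rring.
    apply ex_I; intro t; unfold P; cnt.
    apply ex_I; intro t; unfold dTU, P; cnt. }
  assert (E3 : forall s, s * RInt (fun t => dy u (P p s t)) 0 (2*PI) = s * RInt (fun t => dJi s t) 0 (2*PI) - RInt (fun t => - cos t * dTU s t) 0 (2*PI)).
  { intro s0. rewrite <- I_scal. rewrite <- I_scal. rewrite <- I_minus.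
    - apply RInt_ext. intros t _. unfold dJi, dTU.
      match goal with |- ?L = ?R => assert (L - R = s0 * dy u (P p s0 t) * (1 - (sin t ^ 2 + cos t ^ 2))) by ring end.
      rewrite <- (sin2_cos2 t) in H. unfold Rsqr in H. rlra.
    - apply ex_I; intro t; apply c_mult; [apply continuous_const|]; unfold dJi, P; cnt.
    - apply ex_I; intro t; unfold dTU, P; cnt.
    - apply ex_I; intro t; unfold dJi, P; cnt.
    - apply ex_I; intro t; unfold P; cnt. }
  assert (DK : forall s, is_derive (fun s => s * J s - PI * s^2 * dy u p) s 0).
  { intro s0. eapply d_eq. apply d_minus. apply d_mult. apply d_id. apply DJ.
    apply (d_mulc (fun s => PI * s^2) (dy u p) s0 (2 * PI * s0)). auto_derive; auto; rring.
    specialize (E3 s0). rewrite (MVP_y u Hu) in E3. specialize (E1 s0). cbv beta. rlra. }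
  assert (K := const_of_deriv0 _ DK s 0). cbv beta in K.
  rewrite Rmult_0_l, pow_i, Rmult_0_r, Rmult_0_l, Rminus_0_r in K by lia.
  apply (Rmult_eq_reg_l s); auto. unfold J in K. lra.
Qed.

End Harm2.


Lemma COS_bound' t : Rabs (cos t) <= 1. Proof. apply Rabs_le. apply COS_bound. Qed.
Lemma SIN_bound' t : Rabs (sin t) <= 1. Proof. apply Rabs_le. apply SIN_bound. Qed.

Lemma Icos : RInt (fun t => cos t) 0 (2*PI) = 0.
Proof.
  assert (HD : forall t, is_derive sin t (cos t)) by apply d_sin.
  assert (HC : forall t, continuous cos t) by (intro; apply continuous_cos).
  rewrite (I_derive _ _ _ _ HD HC). rewrite sin_2PI, sin_0. rring.
Qed.
Lemma Isin : RInt (fun t => sin t) 0 (2*PI) = 0.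
Proof.
  assert (HD : forall t, is_derive (fun t => - cos t) t (sin t)) by apply d_ncos.
  assert (HC : forall t, continuous sin t) by (intro; apply continuous_sin).
  rewrite (I_derive _ _ _ _ HD HC). rewrite cos_2PI, cos_0. rring.
Qed.

Lemma harm_cont u : harmonic u -> forall q, continuous u q.
Proof. intros Hu q. destruct Hu as [[_ [_ [_ Hc]]] _]. apply (Hc q). Qed.

Lemma abs_int_bound u (Hu : harmonic u) (w : R -> R) a b c s :
  (forall t, 0 <= a * u (P c s t) + b) -> (forall t, continuous w t) -> (forall t, Rabs (w t) <= 1) ->
  Rabs (RInt (fun t => w t * (a * u (P c s t) + b)) 0 (2*PI)) <= RInt (fun t => a * u (P c s t) + b) 0 (2*PI).
Proof.
  intros Hpos Hw Hw1.
  assert (CU := harm_cont u Hu).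
  assert (E1 : ex_RInt (fun t => a * u (P c s t) + b) 0 (2*PI)).
  { apply ex_I. intro t. unfold P. cont. apply CU. }
  assert (E2 : ex_RInt (fun t => w t * (a * u (P c s t) + b)) 0 (2*PI)).
  { apply ex_I. intro t. apply c_mult. apply Hw. unfold P. cont. apply CU. }
  assert (E3 : ex_RInt (fun t => - (a * u (P c s t) + b)) 0 (2*PI)).
  { apply ex_I. intro t. unfold P. cont. apply CU. }
  assert (PI2 : 0 <= 2 * PI) by (assert (H:=PI_RGT_0); lra).
  apply Rabs_le. split.
  - assert (RInt (fun t => - (a * u (P c s t) + b)) 0 (2*PI) <= RInt (fun t => w t * (a * u (P c s t) + b)) 0 (2*PI)).
    { apply RInt_le; auto. intros t _. specialize (Hpos t). specialize (Hw1 t). apply Rabs_le_between in Hw1. nra. }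
    rewrite (RInt_opp (V:=R_CompleteNormedModule)) in H; auto.
  - apply RInt_le; auto. intros t _. specialize (Hpos t). specialize (Hw1 t). apply Rabs_le_between in Hw1. nra.
Qed.

Lemma grad_est u (Hu : harmonic u) a b c s : 0 < s -> (forall t, 0 <= a * u (P c s t) + b) ->
  Rabs (a * dx u c) * s <= 2 * (a * u c + b) /\ Rabs (a * dy u c) * s <= 2 * (a * u c + b).
Proof.
  intros Hs Hpos.
  assert (CU := harm_cont u Hu).
  assert (EU : ex_RInt (fun t => u (P c s t)) 0 (2*PI)) by (apply ex_I; intro t; unfold P; cont; apply CU).
  assert (EaU : ex_RInt (fun t => a * u (P c s t)) 0 (2*PI)) by (apply ex_I; intro t; unfold P; cont; apply CU).
  assert (ECU : ex_RInt (fun t => cos t * u (P c s t)) 0 (2*PI)) by (apply ex_I; intro t; unfold P; cont; apply CU).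
  assert (ESU : ex_RInt (fun t => sin t * u (P c s t)) 0 (2*PI)) by (apply ex_I; intro t; unfold P; cont; apply CU).
  assert (EaCU : ex_RInt (fun t => a * (cos t * u (P c s t))) 0 (2*PI)) by (apply ex_I; intro t; unfold P; cont; apply CU).
  assert (EaSU : ex_RInt (fun t => a * (sin t * u (P c s t))) 0 (2*PI)) by (apply ex_I; intro t; unfold P; cont; apply CU).
  assert (Ecos : ex_RInt (fun t => b * cos t) 0 (2*PI)) by (apply ex_I; intro t; cont).
  assert (Esin : ex_RInt (fun t => b * sin t) 0 (2*PI)) by (apply ex_I; intro t; cont).
  assert (Ec1 : ex_RInt (fun t => cos t) 0 (2*PI)) by (apply ex_I; intro t; cont).
  assert (Es1 : ex_RInt (fun t => sin t) 0 (2*PI)) by (apply ex_I; intro t; cont).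
  assert (IV : RInt (fun t => a * u (P c s t) + b) 0 (2*PI) = 2 * PI * (a * u c + b)).
  { rewrite (I_plus (fun t => a * u (P c s t)) (fun _ => b)); auto.
    rewrite (I_scal _ _ _ _ EU). rewrite (MVP u Hu). rewrite I_const. rring.
    apply ex_I; intro; cont. }
  assert (IC : RInt (fun t => cos t * (a * u (P c s t) + b)) 0 (2*PI) = a * (PI * s * dx u c)).
  { rewrite (RInt_ext _ (fun t => a * (cos t * u (P c s t)) + b * cos t)) by (intros; rring).
    rewrite (I_plus _ _ _ _ EaCU Ecos). rewrite (I_scal _ _ _ _ ECU). rewrite (I_scal _ _ _ _ Ec1).
    rewrite (CM_x u Hu) by lra. rewrite Icos. rring. }
  assert (IS : RInt (fun t => sin t * (a * u (P c s t) + b)) 0 (2*PI) = a * (PI * s * dy u c)).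
  { rewrite (RInt_ext _ (fun t => a * (sin t * u (P c s t)) + b * sin t)) by (intros; rring).
    rewrite (I_plus _ _ _ _ EaSU Esin). rewrite (I_scal _ _ _ _ ESU). rewrite (I_scal _ _ _ _ Es1).
    rewrite (CM_y u Hu) by lra. rewrite Isin. rring. }
  assert (B1 := abs_int_bound u Hu cos a b c s Hpos (fun t => continuous_cos t) COS_bound').
  assert (B2 := abs_int_bound u Hu sin a b c s Hpos (fun t => continuous_sin t) SIN_bound').
  rewrite IC, IV in B1. rewrite IS, IV in B2.
  assert (HPI := PI_RGT_0).
  rewrite Rabs_mult in B1, B2. rewrite (Rabs_mult (PI * s)) in B1, B2. rewrite (Rabs_mult PI s) in B1, B2.
  rewrite (Rabs_right PI) in B1, B2 by lra. rewrite (Rabs_right s) in B1, B2 by lra.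
  rewrite !Rabs_mult. split; nra.
Qed.


Definition dst (w z : R*R) : R := sqrt ((fst w - fst z)^2 + (snd w - snd z)^2).

Lemma dst_pos w z : 0 <= dst w z.
Proof. apply sqrt_pos. Qed.
Lemma dst_self z : dst z z = 0.
Proof. unfold dst. replace ((fst z - fst z)^2 + (snd z - snd z)^2) with 0 by ring. apply sqrt_0. Qed.
Lemma dst_sym w z : dst w z = dst z w.
Proof. unfold dst. f_equal. ring. Qed.
Lemma dst_triang a b c : dst a c <= dst a b + dst b c.
Proof.
  assert (H := triangle (fst a) (snd a) (fst c) (snd c) (fst b) (snd b)).
  unfold dist_euc, Rsqr in H. unfold dst. simpl. rewrite !Rmult_1_r. exact H.
Qed.
Lemma dst_le_L1 w z : dst w z <= Rabs (fst w - fst z) + Rabs (snd w - snd z).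
Proof.
  unfold dst. rewrite <- (sqrt_pow2 (Rabs (fst w - fst z) + Rabs (snd w - snd z))).
  2: { assert (H1 := Rabs_pos (fst w - fst z)); assert (H2 := Rabs_pos (snd w - snd z)); lra. }
  apply sqrt_le_1_alt.
  assert (H1 := Rabs_pos (fst w - fst z)); assert (H2 := Rabs_pos (snd w - snd z)).
  rewrite <- (pow2_abs (fst w - fst z)), <- (pow2_abs (snd w - snd z)). nra.
Qed.
Lemma L1_le_dst w z : Rabs (fst w - fst z) + Rabs (snd w - snd z) <= 3/2 * dst w z.
Proof.
  assert (H1 := Rabs_pos (fst w - fst z)); assert (H2 := Rabs_pos (snd w - snd z)).
  assert (D := dst_pos w z).
  assert (E : dst w z ^ 2 = Rabs (fst w - fst z) ^ 2 + Rabs (snd w - snd z) ^ 2).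
  { unfold dst. rewrite pow2_sqrt. rewrite !pow2_abs. ring.
    assert (0 <= (fst w - fst z)^2) by apply pow2_ge_0. assert (0 <= (snd w - snd z)^2) by apply pow2_ge_0. lra. }
  apply Rsqr_incr_0_var; unfold Rsqr. 2: lra. assert (HH := pow2_ge_0 (Rabs (fst w - fst z) - Rabs (snd w - snd z))). nra.
Qed.
Lemma dst_P c s t : dst (P c s t) c = Rabs s.
Proof.
  unfold dst, P. cbn [fst snd]. rewrite <- sqrt_Rsqr_abs. f_equal. unfold Rsqr.
  assert (H := sin2_cos2 t). unfold Rsqr in H.
  replace ((fst c + s * cos t - fst c) ^ 2 + (snd c + s * sin t - snd c) ^ 2) with (s * s * (sin t * sin t + cos t * cos t)) by ring.
  rewrite H. ring.
Qed.

Lemma gron (f df : R -> R) K x0 x1 : 0 <= K ->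
  (forall t, Rmin x0 x1 <= t <= Rmax x0 x1 -> is_derive f t (df t) /\ Rabs (df t) <= K * f t) ->
  f x1 <= exp (K * Rabs (x1 - x0)) * f x0.
Proof.
  intros HK H.
  destruct (Rle_dec x0 x1) as [Hle|Hlt].
  - assert (HD : forall t, Rmin x0 x1 <= t <= Rmax x0 x1 -> is_derive (fun t => f t * exp (- K * t)) t (df t * exp (- K * t) + f t * (- K * exp (- K * t)))).
    { intros t Ht. apply (d_mult f (fun t => exp (- K * t))). apply (proj1 (H t Ht)). auto_derive; auto. ring. }
    destruct (MVT_gen (fun t => f t * exp (- K * t)) x0 x1 (fun t => df t * exp (- K * t) + f t * (- K * exp (- K * t)))) as [c [Hc E]].
    + intros t Ht. apply HD. lra.
    + intros t Ht. eapply deriv_cont_pt. apply HD. exact Ht.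
    + cbv beta in E. unfold Rmin, Rmax in Hc. destruct (Rle_dec x0 x1); try lra.
      destruct (H c) as [_ Hd]. unfold Rmin, Rmax; destruct (Rle_dec x0 x1); lra.
      assert (Ep := exp_pos (- K * c)).
      assert (df c - K * f c <= 0) by (apply Rabs_le_between in Hd; lra).
      assert (Q1 : (df c - K * f c) * exp (- K * c) <= 0) by nra.
      assert (Q2 : (df c - K * f c) * exp (- K * c) * (x1 - x0) <= 0) by nra.
      assert (f x1 * exp (- K * x1) <= f x0 * exp (- K * x0)) by lra.
      rewrite Rabs_right by lra.
      assert (E1 : exp (- K * x1) * exp (K * (x1 - x0)) = exp (- K * x0)) by (rewrite <- exp_plus; f_equal; ring).
      assert (Ep1 := exp_pos (K * (x1 - x0))). assert (Ep2 := exp_pos (- K * x1)).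
      nra.
  - assert (HD : forall t, Rmin x0 x1 <= t <= Rmax x0 x1 -> is_derive (fun t => f t * exp (K * t)) t (df t * exp (K * t) + f t * (K * exp (K * t)))).
    { intros t Ht. apply (d_mult f (fun t => exp (K * t))). apply (proj1 (H t Ht)). auto_derive; auto. ring. }
    destruct (MVT_gen (fun t => f t * exp (K * t)) x1 x0 (fun t => df t * exp (K * t) + f t * (K * exp (K * t)))) as [c [Hc E]].
    + intros t Ht. apply HD. unfold Rmin, Rmax in *; destruct (Rle_dec x0 x1), (Rle_dec x1 x0); lra.
    + intros t Ht. eapply deriv_cont_pt. apply HD. unfold Rmin, Rmax in *; destruct (Rle_dec x0 x1), (Rle_dec x1 x0); lra.
    + cbv beta in E. unfold Rmin, Rmax in Hc. destruct (Rle_dec x1 x0); try lra.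
      destruct (H c) as [_ Hd]. unfold Rmin, Rmax; destruct (Rle_dec x0 x1); lra.
      assert (Ep := exp_pos (K * c)).
      assert (0 <= df c + K * f c) by (apply Rabs_le_between in Hd; lra).
      assert (Q1 : 0 <= (df c + K * f c) * exp (K * c)) by nra.
      assert (Q2 : 0 <= (df c + K * f c) * exp (K * c) * (x0 - x1)) by nra.
      assert (f x1 * exp (K * x1) <= f x0 * exp (K * x0)) by lra.
      rewrite Rabs_left by lra.
      assert (E1 : exp (K * x1) * exp (K * - (x1 - x0)) = exp (K * x0)) by (rewrite <- exp_plus; f_equal; ring).
      assert (Ep1 := exp_pos (K * - (x1 - x0))). assert (Ep2 := exp_pos (K * x1)).
      nra.
Qed.

Lemma harm_partials u : harmonic u -> has_partials u.
Proof. intros [[H _] _]; exact H. Qed.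

Lemma exp_mono_le x y : x <= y -> exp x <= exp y.
Proof. intros [H|H]; [left; apply exp_increasing; auto | subst; lra]. Qed.

Lemma harnack u (Hu : harmonic u) a b z rho : 0 < rho ->
  (forall w, dst w z <= rho -> 0 <= a * u w + b) ->
  forall w, Rabs (fst w - fst z) + Rabs (snd w - snd z) <= rho / 2 ->
  a * u w + b <= exp 2 * (a * u z + b) /\ a * u z + b <= exp 2 * (a * u w + b).
Proof.
  intros Hr Hpos w Hw.
  assert (Hp := harm_partials u Hu).
  set (K := 4 / rho).
  assert (HK : 0 <= K) by (unfold K; apply Rlt_le, Rdiv_lt_0_compat; lra).
  assert (GE : forall c, dst c z <= rho / 2 -> Rabs (a * dx u c) <= K * (a * u c + b) /\ Rabs (a * dy u c) <= K * (a * u c + b)).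
  { intros c Hc. destruct (grad_est u Hu a b c (rho/2)) as [G1 G2]; [lra| |].
    - intro t. apply Hpos. eapply Rle_trans. apply (dst_triang _ c). rewrite dst_P. rewrite Rabs_right by lra. lra.
    - unfold K. split; apply (Rmult_le_reg_r (rho/2)); try lra;
      replace (4 / rho * (a * u c + b) * (rho / 2)) with (2 * (a * u c + b)) by (field; lra); auto. }
  destruct z as [z1 z2]; destruct w as [w1 w2]; simpl in Hw |- *.
  assert (A1 := Rabs_pos (w1 - z1)). assert (A2 := Rabs_pos (w2 - z2)).
  assert (R1 : forall t, Rmin z1 w1 <= t <= Rmax z1 w1 -> is_derive (fun t => a * u (t, z2) + b) t (a * dx u (t, z2)) /\ Rabs (a * dx u (t, z2)) <= K * (a * u (t, z2) + b)).
  { intros t Ht. split.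
    - eapply d_eq. apply d_plus. apply d_cmul. apply partial_x. exact Hp. apply d_const. apply Rplus_0_r.
    - apply GE. eapply Rle_trans. apply dst_le_L1. simpl. rewrite Rminus_diag, Rabs_R0, Rplus_0_r.
      unfold Rmin, Rmax in Ht; destruct (Rle_dec z1 w1); unfold Rabs in *; repeat destruct Rcase_abs; lra. }
  assert (R2 : forall t, Rmin z2 w2 <= t <= Rmax z2 w2 -> is_derive (fun t => a * u (w1, t) + b) t (a * dy u (w1, t)) /\ Rabs (a * dy u (w1, t)) <= K * (a * u (w1, t) + b)).
  { intros t Ht. split.
    - eapply d_eq. apply d_plus. apply d_cmul. apply partial_y. exact Hp. apply d_const. apply Rplus_0_r.
    - apply GE. eapply Rle_trans. apply dst_le_L1. simpl.
      unfold Rmin, Rmax in Ht; destruct (Rle_dec z2 w2); unfold Rabs in *; repeat destruct Rcase_abs; lra. }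
  assert (R1' : forall t, Rmin w1 z1 <= t <= Rmax w1 z1 -> is_derive (fun t => a * u (t, z2) + b) t (a * dx u (t, z2)) /\ Rabs (a * dx u (t, z2)) <= K * (a * u (t, z2) + b)).
  { intros t Ht. apply R1. rewrite Rmin_comm, Rmax_comm. exact Ht. }
  assert (R2' : forall t, Rmin w2 z2 <= t <= Rmax w2 z2 -> is_derive (fun t => a * u (w1, t) + b) t (a * dy u (w1, t)) /\ Rabs (a * dy u (w1, t)) <= K * (a * u (w1, t) + b)).
  { intros t Ht. apply R2. rewrite Rmin_comm, Rmax_comm. exact Ht. }
  assert (F1 := gron _ _ K z1 w1 HK R1). assert (F1' := gron _ _ K w1 z1 HK R1').
  assert (F2 := gron _ _ K z2 w2 HK R2). assert (F2' := gron _ _ K w2 z2 HK R2').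
  cbv beta in F1, F1', F2, F2'.
  rewrite Rabs_minus_sym in F1', F2'.
  assert (V0 : 0 <= a * u (z1, z2) + b) by (apply Hpos; rewrite dst_self; lra).
  assert (V1 : 0 <= a * u (w1, z2) + b) by (apply Hpos; eapply Rle_trans; [apply dst_le_L1|]; simpl; rewrite Rminus_diag, Rabs_R0; lra).
  assert (V2 : 0 <= a * u (w1, w2) + b) by (apply Hpos; eapply Rle_trans; [apply dst_le_L1|]; simpl; lra).
  assert (EE : exp (K * Rabs (w2 - z2)) * exp (K * Rabs (w1 - z1)) <= exp 2).
  { rewrite <- exp_plus. apply exp_mono_le. unfold K.
    apply (Rmult_le_reg_r rho); auto. replace ((4 / rho * Rabs (w2 - z2) + 4 / rho * Rabs (w1 - z1)) * rho) with (4 * (Rabs (w2 - z2) + Rabs (w1 - z1))) by (field; lra). lra. }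
  assert (P1 := exp_pos (K * Rabs (w1 - z1))). assert (P2 := exp_pos (K * Rabs (w2 - z2))).
  split.
  - assert (a * u (w1, w2) + b <= exp (K * Rabs (w2 - z2)) * (exp (K * Rabs (w1 - z1)) * (a * u (z1, z2) + b))).
    { eapply Rle_trans. exact F2. apply Rmult_le_compat_l; [lra| exact F1]. }
    nra.
  - assert (a * u (z1, z2) + b <= exp (K * Rabs (w1 - z1)) * (exp (K * Rabs (w2 - z2)) * (a * u (w1, w2) + b))).
    { eapply Rle_trans. exact F1'. apply Rmult_le_compat_l; [lra| exact F2']. }
    nra.
Qed.


Lemma liouville u (Hu : harmonic u) a b : a <> 0 -> (forall w, 0 <= a * u w + b) -> forall p q, u p = u q.
Proof.
  intros Ha Hpos.
  assert (Hp := harm_partials u Hu).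
  assert (Z : forall c, dx u c = 0 /\ dy u c = 0).
  { intro c.
    assert (K : forall s, 0 < s -> Rabs (a * dx u c) * s <= 2 * (a * u c + b) /\ Rabs (a * dy u c) * s <= 2 * (a * u c + b)).
    { intros s Hs. apply grad_est; auto. }
    assert (V := Hpos c).
    split.
    - destruct (Req_dec (dx u c) 0) as [|Hn]; auto. exfalso.
      assert (Hx : 0 < Rabs (a * dx u c)) by (apply Rabs_pos_lt; apply Rmult_integral_contrapositive; auto).
      destruct (K ((2 * (a * u c + b) + 1) / Rabs (a * dx u c))) as [K1 _].
      { apply Rdiv_lt_0_compat; lra. }
      replace (Rabs (a * dx u c) * ((2 * (a * u c + b) + 1) / Rabs (a * dx u c))) with (2 * (a * u c + b) + 1) in K1 by (field; lra).
      lra.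
    - destruct (Req_dec (dy u c) 0) as [|Hn]; auto. exfalso.
      assert (Hx : 0 < Rabs (a * dy u c)) by (apply Rabs_pos_lt; apply Rmult_integral_contrapositive; auto).
      destruct (K ((2 * (a * u c + b) + 1) / Rabs (a * dy u c))) as [_ K1].
      { apply Rdiv_lt_0_compat; lra. }
      replace (Rabs (a * dy u c) * ((2 * (a * u c + b) + 1) / Rabs (a * dy u c))) with (2 * (a * u c + b) + 1) in K1 by (field; lra).
      lra. }
  intros [p1 p2] [q1 q2].
  assert (E1 : u (p1, p2) = u (q1, p2)).
  { apply (const_of_deriv0 (fun t => u (t, p2))). intro t. eapply d_eq. apply partial_x. exact Hp. apply Z. }
  assert (E2 : u (q1, p2) = u (q1, q2)).
  { apply (const_of_deriv0 (fun t => u (q1, t))). intro t. eapply d_eq. apply partial_y. exact Hp. apply Z. }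
  rewrite E1, E2. reflexivity.
Qed.

Lemma unbounded u (Hu : harmonic u) : (exists p q, u p <> u q) ->
  forall B, (exists w, B < u w) /\ (exists w, u w < B).
Proof.
  intros [p [q Hpq]] B. split.
  - apply NNPP. intro H. apply Hpq. apply (liouville u Hu (-1) B); [lra|].
    intro w. destruct (Rle_dec (u w) B); [lra|]. exfalso; apply H; exists w; lra.
  - apply NNPP. intro H. apply Hpq. apply (liouville u Hu 1 (-B)); [lra|].
    intro w. destruct (Rle_dec B (u w)); [lra|]. exfalso; apply H; exists w; lra.
Qed.

Definition seg (p w : R*R) (l : R) : R*R := (fst p + l * (fst w - fst p), snd p + l * (snd w - snd p)).

Lemma dst_seg_p p w l : dst (seg p w l) p = Rabs l * dst w p.
Proof.
  unfold dst, seg; cbn [fst snd].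
  replace ((fst p + l * (fst w - fst p) - fst p) ^ 2 + (snd p + l * (snd w - snd p) - snd p) ^ 2)
    with (l^2 * ((fst w - fst p) ^ 2 + (snd w - snd p) ^ 2)) by ring.
  rewrite sqrt_mult_alt by apply pow2_ge_0. rewrite <- pow2_abs, sqrt_pow2 by apply Rabs_pos. reflexivity.
Qed.
Lemma dst_seg_w p w l : dst (seg p w l) w = Rabs (1 - l) * dst w p.
Proof.
  unfold dst, seg; cbn [fst snd].
  replace ((fst p + l * (fst w - fst p) - fst w) ^ 2 + (snd p + l * (snd w - snd p) - snd w) ^ 2)
    with ((1 - l)^2 * ((fst w - fst p) ^ 2 + (snd w - snd p) ^ 2)) by ring.
  rewrite sqrt_mult_alt by apply pow2_ge_0. rewrite <- pow2_abs, sqrt_pow2 by apply Rabs_pos. reflexivity.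
Qed.

Lemma cont_seg (u : R*R -> R) : (forall q, continuous u q) -> forall p w, continuity (fun l => u (seg p w l)).
Proof.
  intros Cu p w l. apply continuity_pt_filterlim. change (continuous (fun l => u (seg p w l)) l). unfold seg. cont. apply Cu.
Qed.

Lemma ivt_seg (u : R*R -> R) : (forall q, continuous u q) -> forall p w, 0 < u p -> u w <= 0 -> exists l, 0 <= l <= 1 /\ u (seg p w l) = 0.
Proof.
  intros Cu p w H1 H2.
  assert (S0 : seg p w 0 = p) by (unfold seg; rewrite !Rmult_0_l, !Rplus_0_r; destruct p; reflexivity).
  assert (S1 : seg p w 1 = w) by (unfold seg; destruct p, w; simpl; f_equal; ring).
  destruct (Req_dec (u w) 0) as [E|E].
  - exists 1. split; [lra|]. rewrite S1; auto.
  - destruct (IVT (fun l => - u (seg p w l)) 0 1) as [l [Hl El]].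
    + apply continuity_opp. apply cont_seg; auto.
    + lra.
    + rewrite S0. lra.
    + rewrite S1. lra.
    + exists l. split; auto. lra.
Qed.

Lemma creep (Q : R -> R -> Prop) a b : a <= b ->
  (forall x y z, x <= y <= z -> Q x y -> Q y z -> Q x z) ->
  (forall t, a <= t <= b -> exists d, 0 < d /\ forall x y, t - d < x -> x <= y -> y < t + d -> Q x y) ->
  Q a b.
Proof.
  intros Hab Htr Hloc.
  set (S := fun y => a <= y <= b /\ Q a y).
  assert (Sa : S a).
  { split; [lra|]. destruct (Hloc a) as [d [Hd Hl]]; [lra|]. apply Hl; lra. }
  destruct (completeness S) as [m [Hub Hlub]].
  { exists b. intros y [Hy _]. lra. }
  { exists a; exact Sa. }
  assert (Ham : a <= m) by (apply Hub; exact Sa).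
  assert (Hmb : m <= b) by (apply Hlub; intros y [Hy _]; lra).
  destruct (Hloc m) as [d [Hd Hl]]; [lra|].
  assert (Ey : exists y, S y /\ m - d < y).
  { apply NNPP. intro H. assert (m <= m - d); [|lra]. apply Hlub. intros y Hy.
    destruct (Rle_dec y (m - d)); auto. exfalso; apply H; exists y; split; auto; lra. }
  destruct Ey as [y [[Hy1 Hy2] Hy3]].
  assert (Hym : y <= m) by (apply Hub; split; auto).
  set (y' := Rmin (m + d/2) b).
  assert (Hy' : Q a y').
  { apply (Htr a y y'). unfold y'; split; [lra|]. apply Rmin_glb; lra.
    auto. apply Hl; unfold y'; try lra. apply Rmin_glb; lra.
    assert (Rmin (m + d/2) b <= m + d/2) by apply Rmin_l. lra. }
  assert (Sy' : S y').
  { split; auto. unfold y'. split. apply Rmin_glb; lra. apply Rmin_r. }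
  assert (y' <= m) by (apply Hub; auto).
  unfold y' in *. destruct (Rle_dec (m + d/2) b).
  - rewrite Rmin_left in H by lra. lra.
  - rewrite Rmin_right in Hy' by lra. exact Hy'.
Qed.

Lemma bounded_sq (f : R*R -> R) : (forall q, continuous f q) -> forall Rr, 0 <= Rr ->
  exists B, forall w, Rabs (fst w) <= Rr -> Rabs (snd w) <= Rr -> Rabs (f w) <= B.
Proof.
  intros Cf Rr HR.
  assert (Tube : forall x0, exists d B, 0 < d /\ forall x y, Rabs (x - x0) < d -> -Rr <= y <= Rr -> Rabs (f (x,y)) <= B).
  { intro x0.
    set (Q := fun y1 y2 => exists d B, 0 < d /\ forall x y, Rabs (x - x0) < d -> y1 <= y <= y2 -> Rabs (f (x,y)) <= B).
    assert (H : Q (-Rr) Rr).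
    { apply creep; [lra| |].
      - intros a b c Habc [d1 [B1 [Hd1 H1]]] [d2 [B2 [Hd2 H2]]].
        exists (Rmin d1 d2), (Rmax B1 B2). split. apply Rmin_pos; auto.
        intros x y Hx Hy. assert (Rabs (x - x0) < d1) by (eapply Rlt_le_trans; [exact Hx| apply Rmin_l]).
        assert (Rabs (x - x0) < d2) by (eapply Rlt_le_trans; [exact Hx| apply Rmin_r]).
        destruct (Rle_dec y b).
        + eapply Rle_trans; [apply H1; auto; lra| apply Rmax_l].
        + eapply Rle_trans; [apply H2; auto; lra| apply Rmax_r].
      - intros t Ht. destruct (cont_eps f x0 t (Cf (x0,t)) (mkposreal 1 Rlt_0_1)) as [d Hd].
        exists d. split; [apply cond_pos|]. intros y1 y2 H1 H2 H3.
        exists d, (Rabs (f (x0, t)) + 1). split; [apply cond_pos|]. intros x y Hx Hy.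
        assert (Rabs (f (x,y) - f (x0,t)) < 1) by (apply Hd; auto; apply Rabs_def1; lra).
        assert (Rabs (f (x,y)) <= Rabs (f (x,y) - f (x0,t)) + Rabs (f (x0,t))).
        { replace (f (x,y)) with ((f (x,y) - f (x0,t)) + f (x0,t)) at 1 by ring. apply Rabs_triang. }
        simpl in *. lra. }
    exact H. }
  set (Q := fun x1 x2 => exists B, forall x y, x1 <= x <= x2 -> -Rr <= y <= Rr -> Rabs (f (x,y)) <= B).
  assert (H : Q (-Rr) Rr).
  { apply creep; [lra| |].
    - intros a b c Habc [B1 H1] [B2 H2]. exists (Rmax B1 B2). intros x y Hx Hy.
      destruct (Rle_dec x b).
      + eapply Rle_trans; [apply H1; auto; lra| apply Rmax_l].
      + eapply Rle_trans; [apply H2; auto; lra| apply Rmax_r].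
    - intros t Ht. destruct (Tube t) as [d [B [Hd HB]]]. exists d. split; auto.
      intros x1 x2 H1 H2 H3. exists B. intros x y Hx Hy. apply HB; auto. apply Rabs_def1; lra. }
  destruct H as [B HB]. exists B. intros [x y] Hx Hy. simpl in Hx, Hy.
  apply HB; apply Rabs_le_between; auto.
Qed.


Definition alpha : nat := 1200%nat.

Lemma bernoulli n x : 0 <= x -> 1 + INR n * x <= (1 + x) ^ n.
Proof.
  intros Hx. induction n as [|n IH].
  - simpl. lra.
  - rewrite S_INR. simpl. assert (0 <= INR n) by apply pos_INR.
    assert (1 <= (1+x)^n) by (apply pow_R1_Rle; lra). nra.
Qed.

Lemma exp2_le9 : exp 2 <= 9.
Proof.
  replace 2 with (1 + 1) by ring. rewrite exp_plus. assert (H := exp_le_3). assert (H0 := exp_pos 1). nra.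
Qed.

Lemma abs_le_dst1 w z : Rabs (fst w - fst z) <= dst w z.
Proof.
  unfold dst. rewrite <- (sqrt_pow2 (Rabs (fst w - fst z))) by apply Rabs_pos. apply sqrt_le_1_alt. rewrite pow2_abs.
  assert (0 <= (snd w - snd z)^2) by apply pow2_ge_0. lra.
Qed.
Lemma abs_le_dst2 w z : Rabs (snd w - snd z) <= dst w z.
Proof.
  unfold dst. rewrite <- (sqrt_pow2 (Rabs (snd w - snd z))) by apply Rabs_pos. apply sqrt_le_1_alt. rewrite pow2_abs.
  assert (0 <= (fst w - fst z)^2) by apply pow2_ge_0. lra.
Qed.

Lemma pow_half d n : (d/2)^n * 2^n = d^n.
Proof. rewrite <- Rpow_mult_distr. f_equal. field. Qed.

Lemma HZ u (Hu : harmonic u) z r S p : 0 < r -> u z = 0 ->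
  (forall w, dst w z < 3/4 * r -> u w <= S) -> dst p z < 3 * r / 16 -> Rabs (u p) <= 9 * S.
Proof.
  intros Hr Hz HS Hp.
  assert (S0 : 0 <= S) by (rewrite <- Hz; apply HS; rewrite dst_self; lra).
  assert (Dp := dst_pos p z).
  destruct (harnack u Hu (-1) S z (3 * r / 5)) with (w := p) as [H1 _].
  - lra.
  - intros w Hw. assert (u w <= S) by (apply HS; lra). lra.
  - assert (L := L1_le_dst p z). lra.
  - rewrite Hz in H1. assert (E := exp2_le9). assert (u p <= S) by (apply HS; lra).
    apply Rabs_le. split; nra.
Qed.

Lemma construct u (Hu : harmonic u) : (exists p q, u p <> u q) -> forall N, 0 <= N ->
  exists z r p, 0 < r /\ u z = 0 /\ dst p z < 3 * r / 16 /\
    (forall w, dst w z < r -> Rabs (u w) <= 2 ^ (S alpha) * Rabs (u p)) /\ N < Rabs (u p).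
Proof.
  intros Hnc N HN.
  assert (Cu := harm_cont u Hu).
  assert (Cu' : forall q : R*R, continuous u q) by exact Cu.
  destruct (proj1 (unbounded u Hu Hnc 0)) as [w1 Hw1].
  destruct (proj2 (unbounded u Hu Hnc 0)) as [w2 Hw2].
  destruct (ivt_seg u Cu' w1 w2 Hw1 ltac:(lra)) as [l0 [_ Hz0]].
  set (z0 := seg w1 w2 l0).
  set (K := 2 ^ (S alpha)).
  assert (HK : 0 < K) by (apply pow_lt; lra).
  destruct (proj1 (unbounded u Hu Hnc (K * N))) as [q Hq].
  assert (Hq' : K * N < Rabs (u q)) by (eapply Rlt_le_trans; [exact Hq| apply Rle_abs]).
  set (Rr := 2 * dst q z0 + 1).
  assert (Dq := dst_pos q z0).
  assert (HRr : 0 < Rr) by (unfold Rr; lra).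
  destruct (bounded_sq u Cu' (Rabs (fst z0) + Rabs (snd z0) + Rr)) as [B HB].
  { assert (H1 := Rabs_pos (fst z0)); assert (H2 := Rabs_pos (snd z0)); lra. }
  assert (HBd : forall w, dst w z0 <= Rr -> Rabs (u w) <= B).
  { intros w Hw. apply HB.
    - assert (H1 := abs_le_dst1 w z0). assert (H2 := Rabs_triang_inv (fst w) (fst z0)). assert (H3 := Rabs_pos (snd z0)). lra.
    - assert (H1 := abs_le_dst2 w z0). assert (H2 := Rabs_triang_inv (snd w) (snd z0)). assert (H3 := Rabs_pos (fst z0)). lra. }
  set (Phi := fun w => Rabs (u w) * (Rr - dst w z0) ^ alpha).
  set (E := fun y => exists w, dst w z0 <= Rr /\ y = Phi w).
  destruct (completeness E) as [m [Hub Hlub]].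
  { exists (B * Rr ^ alpha). intros y [w [Hw ->]]. unfold Phi.
    apply Rmult_le_compat. apply Rabs_pos. apply pow_le. lra. apply HBd; auto.
    apply pow_incr. assert (H0 := dst_pos w z0). lra. }
  { exists (Phi z0). exists z0. split; auto. rewrite dst_self. lra. }
  assert (Phq : Rabs (u q) * (Rr / 2) ^ alpha <= Phi q).
  { unfold Phi. apply Rmult_le_compat_l. apply Rabs_pos. apply pow_incr. unfold Rr; lra. }
  assert (Hqm : Phi q <= m) by (apply Hub; exists q; split; auto; unfold Rr; lra).
  assert (Hhalf : 0 < (Rr/2) ^ alpha) by (apply pow_lt; lra).
  assert (Huq : 0 < Rabs (u q)) by (assert (0 <= K * N) by (apply Rmult_le_pos; lra); lra).
  assert (Hm : 0 < m) by (assert (0 < Rabs (u q) * (Rr / 2) ^ alpha) by (apply Rmult_lt_0_compat; auto); lra).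
  assert (Ep : exists p, dst p z0 <= Rr /\ m / 2 < Phi p).
  { apply NNPP. intro H. assert (m <= m / 2); [|lra]. apply Hlub. intros y [w [Hw ->]].
    destruct (Rle_dec (Phi w) (m/2)); auto. exfalso. apply H. exists w. split; auto; lra. }
  destruct Ep as [p [Hp Hpm]].
  set (d := Rr - dst p z0).
  assert (Dp := dst_pos p z0).
  assert (Hd : 0 < d).
  { destruct (Req_dec d 0) as [E0|E0].
    - exfalso. unfold Phi in Hpm. fold d in Hpm. rewrite E0, pow_i in Hpm by (unfold alpha; lia). lra.
    - unfold d in *; lra. }
  assert (Hda : 0 < d ^ alpha) by (apply pow_lt; lra).
  assert (HPp : Phi p = Rabs (u p) * d ^ alpha) by reflexivity.
  assert (Loc : forall w, dst w p < d / 2 -> Rabs (u w) <= K * Rabs (u p)).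
  { intros w Hw.
    assert (T := dst_triang w p z0).
    assert (Hw0 : dst w z0 <= Rr) by (unfold d in *; lra).
    assert (Pw : Phi w <= m) by (apply Hub; exists w; auto).
    assert (Pw2 : Rabs (u w) * (d/2) ^ alpha <= Phi w).
    { unfold Phi. apply Rmult_le_compat_l. apply Rabs_pos. apply pow_incr. unfold d in *; lra. }
    assert (PH := pow_half d alpha).
    assert (Hd2 : 0 < (d/2)^alpha) by (apply pow_lt; lra).
    unfold K. rewrite <- tech_pow_Rmult.
    assert (A2 : 0 < 2 ^ alpha) by (apply pow_lt; lra).
    assert (Rabs (u w) * (d/2)^alpha < 2 * Rabs (u p) * ((d/2)^alpha * 2^alpha)) by (rewrite PH; lra).
    assert (Rabs (u w) < 2 * Rabs (u p) * 2 ^ alpha).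
    { apply (Rmult_lt_reg_r ((d/2)^alpha)); auto. nra. }
    lra. }
  assert (Big : N < Rabs (u p)).
  { assert (Hdr : d ^ alpha <= Rr ^ alpha) by (apply pow_incr; unfold d; lra).
    assert (PH := pow_half Rr alpha).
    assert (A2 : 0 < 2 ^ alpha) by (apply pow_lt; lra).
    assert (HRa : 0 < Rr ^ alpha) by (apply pow_lt; lra).
    assert (X1 : Rabs (u q) * (Rr/2)^alpha < 2 * (Rabs (u p) * d ^ alpha)) by lra.
    assert (X2 : Rabs (u q) * (Rr/2)^alpha < 2 * (Rabs (u p) * Rr ^ alpha)).
    { assert (0 <= Rabs (u p)) by apply Rabs_pos. nra. }
    assert (X3 : Rabs (u q) < K * Rabs (u p)).
    { unfold K. rewrite <- tech_pow_Rmult. rewrite <- PH in X2. apply (Rmult_lt_reg_r ((Rr/2)^alpha)); auto. nra. }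
    assert (K * N < K * Rabs (u p)) by lra.
    apply (Rmult_lt_reg_l K); auto. }
  assert (Zn : exists z, u z = 0 /\ dst z p < d / 16).
  { apply NNPP. intro Hno.
    set (D := dst p z0).
    destruct (Rlt_dec D (d/16)) as [HD|HD].
    { apply Hno. exists z0. split; auto. rewrite dst_sym. auto. }
    assert (Hup : u p <> 0) by (intro E0; rewrite E0, Rabs_R0 in Big; lra).
    set (sg := if Rlt_dec 0 (u p) then 1 else -1).
    assert (Hsg : sg * u p = Rabs (u p)).
    { unfold sg. destruct (Rlt_dec 0 (u p)). rewrite Rabs_right by lra; ring. rewrite Rabs_left by lra; ring. }
    assert (Hsg2 : forall x, Rabs x >= sg * x).
    { intro x. unfold sg. destruct (Rlt_dec 0 (u p)); apply Rle_ge; [rewrite Rmult_1_l; apply Rle_abs|].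
      replace (-1 * x) with (- x) by ring. rewrite <- Rabs_Ropp. apply Rle_abs. }
    assert (Hsgnz : sg <> 0) by (unfold sg; destruct (Rlt_dec 0 (u p)); lra).
    assert (Pos : forall w, dst w p < d / 16 -> 0 < sg * u w).
    { intros w Hw. destruct (Rlt_dec 0 (sg * u w)) as [|Hn]; auto. exfalso.
      destruct (ivt_seg (fun x => sg * u x) ltac:(intro x; apply c_mult; [apply continuous_const| apply Cu]) p w)
        as [l [Hl El]]; [lra|lra|].
      apply Hno. exists (seg p w l). split.
      - apply Rmult_integral in El. destruct El; [contradiction|auto].
      - rewrite dst_seg_p. rewrite Rabs_right by lra. assert (H0 := dst_pos w p). nra. }
    set (lam := (d / 60) / D).
    assert (HDp : 0 < D) by lra.
    assert (Hlam : 0 < lam < 1).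
    { unfold lam. split. apply Rdiv_lt_0_compat; lra. apply (Rmult_lt_reg_r D); auto. field_simplify; lra. }
    set (ws := seg p z0 lam).
    assert (Dws : dst ws p = d / 60).
    { unfold ws. rewrite dst_seg_p. rewrite Rabs_right by lra. rewrite dst_sym. fold D. unfold lam. field. lra. }
    assert (Dws0 : dst ws z0 = D - d / 60).
    { unfold ws. rewrite dst_seg_w. rewrite Rabs_right by lra. rewrite dst_sym. fold D. unfold lam. field. lra. }
    destruct (harnack u Hu sg 0 p (d / 20)) with (w := ws) as [_ H2].
    - lra.
    - intros w Hw. assert (0 < sg * u w) by (apply Pos; lra). lra.
    - assert (L := L1_le_dst ws p). lra.
    - rewrite !Rplus_0_r in H2. rewrite Hsg in H2.
      assert (HDR : D <= Rr) by (unfold D; lra).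
      assert (Pw : Phi ws <= m) by (apply Hub; exists ws; split; auto; rewrite Dws0; lra).
      assert (PW : Phi ws = Rabs (u ws) * (d ^ alpha * (61/60) ^ alpha)).
      { unfold Phi. rewrite <- Rpow_mult_distr. f_equal. f_equal. rewrite Dws0. unfold D, d. lra. }
      assert (Bn := bernoulli alpha (1/60) ltac:(lra)).
      replace (1 + 1/60) with (61/60) in Bn by field.
      assert (INR alpha = 1200) by (unfold alpha; rewrite INR_IZR_INZ; simpl; lra).
      assert (E9 := exp2_le9). assert (Ee := exp_pos 2).
      assert (Hws : sg * u ws <= Rabs (u ws)) by (apply Rge_le, Hsg2).
      assert (Q1 : Rabs (u p) <= exp 2 * Rabs (u ws)) by nra.
      assert (Q2 : 21 <= (61/60)^alpha) by lra.
      assert (Q3 : Rabs (u p) * 21 <= 9 * Rabs (u ws) * (61/60)^alpha).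
      { assert (0 <= Rabs (u ws)) by apply Rabs_pos. assert (0 <= Rabs (u p)) by apply Rabs_pos. nra. }
      assert (Q4 : 21 * Phi p <= 9 * Phi ws).
      { rewrite HPp, PW. nra. }
      lra. }
  destruct Zn as [z [Hz Hzp]].
  exists z, (d / 3), p. split; [lra|]. split; auto. split.
  { rewrite dst_sym. lra. }
  split; auto.
  intros w Hw. apply Loc. assert (T := dst_triang w z p). lra.
Qed.


Lemma Rbar_mult_pos_pinf c : 0 < c -> Rbar_mult (Finite c) p_infty = p_infty.
Proof.
  intros Hc. unfold Rbar_mult, Rbar_mult'.
  destruct (Rle_dec 0 c) as [H|H]; [|lra].
  destruct (Rle_lt_or_eq_dec 0 c H); [reflexivity|lra].
Qed.

Lemma M_ub h z r w : in_disc z r w -> Rbar_le (Finite (h w)) (M h z r).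
Proof. intros Hw. unfold M. apply (proj1 (Lub_Rbar_correct _)). exists w; auto. Qed.

Lemma M_le h z r (b : R) : (forall w, in_disc z r w -> h w <= b) -> Rbar_le (M h z r) (Finite b).
Proof. intros H. unfold M. apply (proj2 (Lub_Rbar_correct _)). intros x [w [Hw ->]]. simpl. apply H; auto. Qed.

Lemma nat_above (A : R) : exists N : nat, A <= INR N.
Proof.
  destruct (archimed (Rabs A)) as [H1 _].
  assert (H0 : (0 < up (Rabs A))%Z) by (apply lt_IZR; assert (H := Rabs_pos A); simpl; lra).
  exists (Z.to_nat (up (Rabs A))). rewrite INR_IZR_INZ. rewrite Z2Nat.id by lia.
  assert (H := Rle_abs A). lra.
Qed.

Theorem corollary5 :
  exists C0 : R, 0 < C0 /\
  forall u : R * R -> R,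
    harmonic u ->
    (exists p q : R * R, u p <> u q) ->
    exists (z : nat -> R * R) (r : nat -> R),
      (forall n, 0 < r n /\ u (z n) = 0 /\
         Rbar_le (M (fun w => Rabs (u w)) (z n) (r n))
                 (Rbar_mult (Finite C0) (M u (z n) (3 / 4 * r n)))) /\
      (forall A : R, exists N : nat, forall n : nat, (N <= n)%nat ->
         Rbar_lt (Finite A) (M u (z n) (r n))).
Proof.
  set (C0 := 9 * 2 ^ (S alpha)).
  assert (HC0 : 0 < C0) by (unfold C0; assert (0 < 2 ^ S alpha) by (apply pow_lt; lra); lra).
  exists C0. split; auto.
  intros u Hu Hnc.
  assert (H : forall n : nat, exists t : (R*R) * R * (R*R),
    0 < snd (fst t) /\ u (fst (fst t)) = 0 /\ dst (snd t) (fst (fst t)) < 3 * snd (fst t) / 16 /\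
    (forall w, dst w (fst (fst t)) < snd (fst t) -> Rabs (u w) <= 2 ^ (S alpha) * Rabs (u (snd t))) /\
    9 * INR n < Rabs (u (snd t))).
  { intro n. destruct (construct u Hu Hnc (9 * INR n)) as [z [r [p Hzrp]]].
    { assert (H0 := pos_INR n). lra. }
    exists (z, r, p). exact Hzrp. }
  set (T := fun n => proj1_sig (constructive_indefinite_description _ (H n))).
  assert (HT : forall n, let t := T n in
    0 < snd (fst t) /\ u (fst (fst t)) = 0 /\ dst (snd t) (fst (fst t)) < 3 * snd (fst t) / 16 /\
    (forall w, dst w (fst (fst t)) < snd (fst t) -> Rabs (u w) <= 2 ^ (S alpha) * Rabs (u (snd t))) /\
    9 * INR n < Rabs (u (snd t))).
  { intro n. unfold T. apply (proj2_sig (constructive_indefinite_description _ (H n))). }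
  exists (fun n => fst (fst (T n))), (fun n => snd (fst (T n))).
  split.
  - intro n. destruct (HT n) as [Hr [Hz [Hp [Hloc Hbig]]]].
    set (z := fst (fst (T n))) in *. set (r := snd (fst (T n))) in *. set (p := snd (T n)) in *.
    split; auto. split; auto.
    destruct (M u z (3 / 4 * r)) as [Sv| |] eqn:EM.
    + assert (HS : forall w, dst w z < 3/4 * r -> u w <= Sv).
      { intros w Hw. assert (X := M_ub u z (3/4 * r) w Hw). rewrite EM in X. exact X. }
      assert (HZ9 := HZ u Hu z r Sv p Hr Hz HS Hp).
      simpl. apply M_le. intros w Hw. eapply Rle_trans. apply Hloc. exact Hw.
      unfold C0. assert (0 < 2 ^ S alpha) by (apply pow_lt; lra). nra.
    + rewrite Rbar_mult_pos_pinf by auto. destruct (M (fun w => Rabs (u w)) z r); simpl; auto.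
    + exfalso. assert (X := M_ub u z (3/4 * r) z). rewrite EM in X. apply X.
      unfold in_disc. fold (dst z z). rewrite dst_self. lra.
  - intros A. destruct (nat_above A) as [N HN]. exists N. intros n Hn.
    apply Rbar_not_le_lt. intro Hle.
    destruct (HT n) as [Hr [Hz [Hp [Hloc Hbig]]]].
    set (z := fst (fst (T n))) in *. set (r := snd (fst (T n))) in *. set (p := snd (T n)) in *.
    assert (HS : forall w, dst w z < 3/4 * r -> u w <= A).
    { intros w Hw. assert (X := M_ub u z r w). assert (Hw' : in_disc z r w) by (unfold in_disc; fold (dst w z); lra).
      specialize (X Hw'). exact (Rbar_le_trans _ _ _ X Hle). }
    assert (HZ9 := HZ u Hu z r A p Hr Hz HS Hp).
    assert (INR N <= INR n) by (apply le_INR; exact Hn). lra.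
Qed.
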